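(* Let $\|\cdot\|$ be a norm on $\mathbb{R}^n$ whose dual norm $\|\cdot\|^*$ is an algebra norm. Let $a<b$ and let $f\in\mathbb{R}^n$ take values in $[a,b]$. Let $\eta:\mathbb{R}_+\to\mathbb{R}_+$ be a positive decreasing function and let $\epsilon>0$. Then there is a constant $C_0$, depending on $\eta$ and $\epsilon$ only, such that $f$ can be written as $f=f_1+f_2+f_3$ with $\|f_1\|^*\le C_0$, $\|f_2\|\le\eta(\|f_1\|^* )$ and $\|f_3\|_2\le\epsilon$, and such that both $f_1$ and $f_1+f_3$ take values in $[a,b]$.
   Context: Functions in $\mathbb{R}^n$ are functions on $\{1,\dots,n\}$, with $\langle f,g\rangle=\frac1n\sum_xf(x)g(x)$ and $\|f\|_2=(\frac1n\sum_x f(x)^2)^{1/2}$. The dual norm of $\|\cdot\|$ is $\|\phi\|^*=\max\{\langle f,\phi\rangle:\|f\|\le1\}$. An algebra norm on $\mathbb{R}^n$ is a norm $|\cdot|$ such that $|fg|\le|f||g|$ for all $f,g$ (pointwise product) and $|\mathbf 1|=1$, where $\mathbf 1$ is the constant function $1$. *)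

(* Defs.v *)
From HB Require Import structures.
From mathcomp Require Import all_boot all_order all_algebra.
From mathcomp Require Import classical_sets reals.
Set Implicit Arguments. Unset Strict Implicit. Unset Printing Implicit Defensive.
Import Order.TTheory GRing.Theory Num.Theory.
Local Open Scope ring_scope.
Local Open Scope classical_set_scope.

Definition vec (R : realType) (n : nat) := {ffun 'I_n -> R}.

Section Defs.
Variables (R : realType) (n : nat).

Definition inner (f g : vec R n) : R := n%:R^-1 * \sum_(i < n) f i * g i.

Definition l2norm (f : vec R n) : R := Num.sqrt (inner f f).

Definition vadd (f g : vec R n) : vec R n := [ffun i => f i + g i].
Definition vscale (c : R) (f : vec R n) : vec R n := [ffun i => c * f i].
Definition vmul (f g : vec R n) : vec R n := [ffun i => f i * g i].
Definition vone : vec R n := [ffun _ => 1].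
Definition vzero : vec R n := [ffun _ => 0].

Definition is_norm (N : vec R n -> R) : Prop :=
  [/\ forall f, 0 <= N f,
      forall f, N f = 0 -> f = vzero,
      forall c f, N (vscale c f) = `|c| * N f
    & forall f g, N (vadd f g) <= N f + N g].

(* dual norm: ||phi||^* = max { <f,phi> : ||f|| <= 1 } (the max is a sup) *)
Definition dual_norm (N : vec R n -> R) (phi : vec R n) : R :=
  sup [set inner f phi | f in [set f | N f <= 1]].

Definition is_algebra_norm (M : vec R n -> R) : Prop :=
  [/\ is_norm M, forall f g, M (vmul f g) <= M f * M g & M vone = 1].

Definition takes_values_in (a b : R) (f : vec R n) : Prop :=
  forall i, a <= f i <= b.

End Defs.

(* Main.v *)
Require Import Defs.
From HB Require Import structures.
From mathcomp Require Import all_boot all_order all_algebra.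
From mathcomp Require Import classical_sets reals.
From mathcomp Require Import ring lra boolp.
Import Order.TTheory GRing.Theory Num.Theory.
Local Open Scope ring_scope.
Set Implicit Arguments. Unset Strict Implicit. Unset Printing Implicit Defensive.

Section Basic.
Variables (R : realType) (n : nat).
Implicit Types (f g h : vec R n).

Definition vsub f g : vec R n := [ffun i => f i - g i].
Definition sq f : R := inner f f.
Definition ev (i : 'I_n) : vec R n := [ffun j => (j == i)%:R].

Lemma inner_sym f g : inner f g = inner g f.
Proof. by rewrite /inner; congr (_ * _); apply: eq_bigr => i _; rewrite mulrC. Qed.

Lemma inner_addl f g h : inner (vadd f g) h = inner f h + inner g h.
Proof.
rewrite /inner -mulrDr; congr (_ * _); rewrite -big_split; apply: eq_bigr => i _.
by rewrite ffunE mulrDl.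
Qed.

Lemma inner_subl f g h : inner (vsub f g) h = inner f h - inner g h.
Proof.
rewrite /inner -mulrBr; congr (_ * _); rewrite -sumrB; apply: eq_bigr => i _.
by rewrite ffunE mulrBl.
Qed.

Lemma inner_scalel c f g : inner (vscale c f) g = c * inner f g.
Proof.
rewrite /inner mulrCA; congr (_ * _); rewrite mulr_sumr; apply: eq_bigr => i _.
by rewrite ffunE mulrA.
Qed.

Lemma inner_addr f g h : inner h (vadd f g) = inner h f + inner h g.
Proof. by rewrite !(inner_sym h) inner_addl. Qed.
Lemma inner_subr f g h : inner h (vsub f g) = inner h f - inner h g.
Proof. by rewrite !(inner_sym h) inner_subl. Qed.
Lemma inner_scaler c f g : inner g (vscale c f) = c * inner g f.
Proof. by rewrite !(inner_sym g) inner_scalel. Qed.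

Lemma inner0l g : inner (vzero R n) g = 0.
Proof. by rewrite /inner big1 ?mulr0 // => i _; rewrite ffunE mul0r. Qed.
Lemma inner0r g : inner g (vzero R n) = 0.
Proof. by rewrite inner_sym inner0l. Qed.

Lemma sq_ge0 f : 0 <= sq f.
Proof.
rewrite /sq /inner mulr_ge0 ?invr_ge0 ?ler0n // sumr_ge0 // => i _.
by rewrite -expr2 sqr_ge0.
Qed.

Lemma vaddE f g : vadd f g = f + g.
Proof. by apply/ffunP => i; rewrite !ffunE. Qed.

Section NormFacts.
Variable P : vec R n -> R.
Hypothesis hP : is_norm P.

Lemma P_ge0 f : 0 <= P f. Proof. by case: hP. Qed.
Lemma P_eq0 f : P f = 0 -> f = vzero R n. Proof. by case: hP => _ h _ _; apply: h. Qed.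
Lemma P_scale c f : P (vscale c f) = `|c| * P f. Proof. by case: hP. Qed.
Lemma P_add f g : P (vadd f g) <= P f + P g. Proof. by case: hP. Qed.

Lemma P0 : P (vzero R n) = 0.
Proof.
have -> : vzero R n = vscale 0 (vzero R n) by apply/ffunP => i; rewrite !ffunE mul0r.
by rewrite P_scale normr0 mul0r.
Qed.

Lemma P_sub f g : P (vsub f g) <= P f + P g.
Proof.
have -> : vsub f g = vadd f (vscale (-1) g) by apply/ffunP => i; rewrite !ffunE mulN1r.
by rewrite (le_trans (P_add _ _)) // P_scale normrN normr1 mul1r.
Qed.

Lemma P_sub_ge f g : P f - P g <= P (vsub f g).
Proof.
have -> : f = vadd (vsub f g) g by apply/ffunP => i; rewrite !ffunE subrK.
have := P_add (vsub f g) g.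
have -> : vsub (vadd (vsub f g) g) g = vsub f g by apply/ffunP => i; rewrite !ffunE subrK.
lra.
Qed.

Lemma P_pos f : f <> vzero R n -> 0 < P f.
Proof. by move=> hf; rewrite lt_neqAle P_ge0 andbT; apply/eqP => /esym/P_eq0. Qed.

Lemma P_sum (I : finType) (F : I -> vec R n) :
  P (\sum_(i : I) F i) <= \sum_(i : I) P (F i).
Proof.
apply: (big_rec2 (fun x y => P x <= y)).
  have -> : (0 : vec R n) = vzero R n by apply/ffunP => i; rewrite !ffunE.
  by rewrite P0.
move=> i y1 y2 _ ih; rewrite -vaddE (le_trans (P_add _ _)) //.
by rewrite lerD2l.
Qed.

End NormFacts.
End Basic.
Arguments ev {R n} i.

Section Dual.
Variables (R : realType) (n : nat) (N : vec R n -> R).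
Hypotheses (hN : is_norm N) (hM : is_algebra_norm (dual_norm N)).
Local Notation M := (dual_norm N).
Local Set Default Proof Using "All".
Implicit Types (f g y u phi : vec R n) (i : 'I_n).

Lemma hMn : is_norm M. Proof. by case: hM. Qed.
Lemma M_mul f g : M (vmul f g) <= M f * M g. Proof. by case: hM. Qed.
Lemma M_one : M (vone R n) = 1. Proof. by case: hM. Qed.

Lemma n_gt0 : (0 < n)%N.
Proof.
rewrite lt0n; apply/eqP => n0.
have e : vone R n = vzero R n.
  by apply/ffunP => i; exfalso; have := ltn_ord i; move: (nat_of_ord i); rewrite n0.
by have := M_one; rewrite e (P0 hMn) => /eqP; rewrite eq_sym oner_eq0.
Qed.

Lemma dual_ub phi : has_ubound [set inner f phi | f in [set f | N f <= 1]].
Proof.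
apply: contrapT => hnot.
have hs : sup [set inner f phi | f in [set f | N f <= 1]] = 0.
  by apply: sup_out => -[_ ?]; exact: hnot.
have := P_eq0 hMn hs => phi0; apply: hnot; exists 0 => x [f _ <-].
by rewrite phi0 inner0r.
Qed.

Lemma dual_le phi f : N f <= 1 -> inner f phi <= M phi.
Proof.
move=> hf; have := ub_le_sup (dual_ub phi); move=> /(_ (inner f phi)); apply.
by exists f.
Qed.

Lemma dual_holder f phi : inner f phi <= N f * M phi.
Proof.
have [Nf0|Nfn0] := eqVneq (N f) 0.
  by rewrite (P_eq0 hN Nf0) inner0l (P0 hN) mul0r.
have Npos : 0 < N f by rewrite lt_neqAle eq_sym Nfn0 (P_ge0 hN).
have h1 : N (vscale (N f)^-1 f) <= 1.
  by rewrite (P_scale hN) ger0_norm ?invr_ge0 ?(P_ge0 hN) // mulVf.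
have := dual_le phi h1; rewrite inner_scalel => h.
have e : inner f phi = N f * ((N f)^-1 * inner f phi).
  by rewrite mulrA mulfV ?mul1r // gt_eqF.
by rewrite e ler_pM2l.
Qed.

Lemma dual_ge phi c : (forall f, N f <= 1 -> inner f phi <= c) -> M phi <= c.
Proof.
move=> h; apply: ge_sup.
  by exists (inner (vzero R n) phi), (vzero R n) => //=; rewrite (P0 hN) ler01.
by move=> x [f hf <-]; apply: h.
Qed.

Lemma ev_neq0 i : ev i <> vzero R n.
Proof. by move=> /ffunP /(_ i); rewrite !ffunE eqxx => /eqP; rewrite oner_eq0. Qed.

Lemma Mev_pos i : 0 < M (ev i).
Proof. exact: (P_pos hMn (@ev_neq0 i)). Qed.

Lemma coordM phi i : `|phi i| <= M phi.
Proof.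
have e : vmul phi (ev i) = vscale (phi i) (ev i).
  apply/ffunP => j; rewrite !ffunE; case: eqVneq => [->|_]; by rewrite ?mulr1 ?mulr0.
have := M_mul phi (ev i); rewrite e (P_scale hMn) ler_pM2r //; exact: Mev_pos.
Qed.

Lemma sqM u : sq u <= M u ^+ 2.
Proof.
rewrite /sq /inner.
have hn : (0 < n%:R :> R) by rewrite ltr0n n_gt0.
rewrite -(ler_pM2l hn) mulrA mulfV ?gt_eqF // mul1r.
have -> : n%:R * M u ^+ 2 = \sum_(i < n) M u ^+ 2 by rewrite sumr_const card_ord mulr_natl.
apply: ler_sum => i _; rewrite -expr2 -real_normK ?num_real //.
by rewrite lerXn2r ?nnegrE ?normr_ge0 ?(P_ge0 hMn) ?coordM.
Qed.

Lemma inner_ev f i : inner f (ev i) = n%:R^-1 * f i.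
Proof.
rewrite /inner (bigD1 i) //= big1 ?addr0 ?ffunE ?eqxx ?mulr1 // => j hj.
by rewrite ffunE (negbTE hj) mulr0.
Qed.

Lemma coordN y i : `|y i| <= n%:R * N y * M (ev i).
Proof.
have hn : (0 < n%:R :> R) by rewrite ltr0n n_gt0.
have h1 := dual_holder y (ev i); rewrite inner_ev in h1.
have h2 := dual_holder (vscale (-1) y) (ev i); rewrite inner_ev (P_scale hN) in h2.
rewrite ffunE normrN normr1 mul1r in h2.
rewrite -mulrA; have e : y i = n%:R * (n%:R^-1 * y i).
  by rewrite mulrA mulfV ?gt_eqF ?mul1r.
rewrite [in X in X <= _]e normrM ger0_norm ?ler0n // ler_pM2l //.
rewrite ler_norml h1 andbT; move: h2; rewrite mulN1r mulrN; lra.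
Qed.

Lemma sum_ffunE (I : finType) (F : I -> vec R n) j : (\sum_(i : I) F i) j = \sum_(i : I) F i j.
Proof.
apply: (big_morph (fun x : vec R n => x j)) => [x y|]; by rewrite ffunE.
Qed.

Lemma N_coord y : N y <= \sum_(i < n) `|y i| * N (ev i).
Proof.
have e : y = \sum_(i < n) vscale (y i) (ev i).
  apply/ffunP => j; rewrite sum_ffunE (bigD1 j) //= big1.
    by rewrite addr0 !ffunE eqxx mulr1.
  by move=> k hk; rewrite !ffunE eq_sym (negbTE hk) mulr0.
rewrite [in X in X <= _]e (le_trans (P_sum hN _)) //.
by apply: ler_sum => i _; rewrite (P_scale hN).
Qed.
End Dual.

Lemma sq_sub_scale (R : realType) (n : nat) (a b : vec R n) s :
  sq (vsub a (vscale s b)) = sq a - 2 * s * inner a b + s ^+ 2 * sq b.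
Proof.
rewrite /sq inner_subl !inner_subr !inner_scalel !inner_scaler (inner_sym b a).
ring.
Qed.

Lemma sum_sq (R : realType) (n : nat) (a : vec R n) :
  \sum_(i < n) a i ^+ 2 = n%:R * sq a.
Proof.
case: n a => [|m] a; first by rewrite big_ord0 mul0r.
rewrite /sq /inner mulrA mulfV ?mul1r ?pnatr_eq0 //.
Qed.

Section HB.
Variables (R : realType) (n : nat) (N : vec R n -> R).
Hypotheses (hN : is_norm N) (hM : is_algebra_norm (dual_norm N)).
Local Notation M := (dual_norm N).
Local Set Default Proof Using "All".
Implicit Types (f g y u phi : vec R n) (i : 'I_n).

Lemma HB_aux h t : 0 < t -> 0 < N h ->
  exists phi, phi <> vzero R n /\ N h * M phi <= (1 + t) * inner h phi.
Proof.
move=> ht hnu; set nu := N h.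
have hn : (0 < n%:R :> R) by rewrite ltr0n (n_gt0 hN hM).
set p := vscale (1 + t) h.
set B := [set y : vec R n | N y <= nu]%classic.
set E := [set sq (vsub p y) | y in B]%classic.
set T := \sum_(i < n) N (ev i) ^+ 2.
have hT : 0 < T.
  rewrite /T (bigD1 (Ordinal (n_gt0 hN hM))) //=.
  have := P_pos hN (@ev_neq0 R n N hN hM (Ordinal (n_gt0 hN hM))).
  move=> h0; have : 0 <= \sum_(i < n | i != Ordinal (n_gt0 hN hM)) N (ev i) ^+ 2.
    by apply: sumr_ge0 => i _; rewrite sqr_ge0.
  move=> h1; have : 0 < N (ev (Ordinal (n_gt0 hN hM))) ^+ 2 by rewrite exprn_gt0.
  lra.
set e1 := t ^+ 2 * nu ^+ 2 / (n%:R * T).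
have he1 : 0 < e1 by rewrite /e1 divr_gt0 ?mulr_gt0 ?exprn_gt0.
set W := n%:R^-1 * \sum_(i < n) (2 * n%:R * nu * M (ev i)) ^+ 2.
have hW : 0 <= W.
  by rewrite mulr_ge0 ?invr_ge0 ?ler0n // sumr_ge0 // => i _; rewrite sqr_ge0.
set s := e1 / (W + e1).
have hs0 : 0 < s by rewrite divr_gt0 // ltr_wpDl.
have hs1 : s <= 1 by rewrite ler_pdivrMr ?mul1r ?lerDr // ltr_wpDl.
have hsW : s * W <= e1.
  rewrite /s mulrAC ler_pdivrMr ?ltr_wpDl //; nra.
set tau := s * e1.
have htau : 0 < tau by rewrite mulr_gt0.
have Ene : (E !=set0)%classic by exists (sq (vsub p (vzero R n))), (vzero R n) => //; rewrite /B /= (P0 hN); exact: ltW.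
have Elb : has_lbound E by exists 0 => x [y _ <-]; exact: sq_ge0.
have [x [q hq <-] hqinf] := inf_adherent htau (conj Ene Elb).
set phi0 := vsub p q.
have Wb : forall y, B y -> sq (vsub y q) <= W.
  move=> y hy; rewrite /sq /inner /W ler_pM2l ?invr_gt0 //.
  apply: ler_sum => i _; rewrite !ffunE -expr2.
  have h1 := coordN hN hM y i; have h2 := coordN hN hM q i.
  have hMi := Mev_pos hN hM i.
  have : `|y i - q i| <= 2 * n%:R * nu * M (ev i).
    rewrite (le_trans (ler_normB _ _)) //.
    have : n%:R * N y * M (ev i) <= n%:R * nu * M (ev i).
      by rewrite ler_pM2r // ler_pM2l.
    have : n%:R * N q * M (ev i) <= n%:R * nu * M (ev i).
      by rewrite ler_pM2r // ler_pM2l.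
    lra.
  move=> hb; rewrite -real_normK ?num_real //.
  by rewrite lerXn2r ?nnegrE ?normr_ge0 // (le_trans (normr_ge0 _) hb).
have var : forall y, B y -> inner phi0 y <= inner phi0 q + e1.
  move=> y hy.
  set z := vadd (vscale (1 - s) q) (vscale s y).
  have hz : B z.
    rewrite /B /z /= (le_trans (P_add hN _ _)) // !(P_scale hN).
    rewrite ger0_norm ?subr_ge0 // ger0_norm ?(ltW hs0) //.
    have : N q <= nu := hq; have : N y <= nu := hy; nra.
  have hinf : inf E <= sq (vsub p z) by apply: ge_inf => //; exists z.
  have ez : vsub p z = vsub phi0 (vscale s (vsub y q)).
    by apply/ffunP => i; rewrite !ffunE; ring.
  rewrite ez sq_sub_scale in hinf.
  have := Wb y hy => hWy.
  have h2 : 2 * s * inner phi0 (vsub y q) <= tau + s ^+ 2 * sq (vsub y q) by lra.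
  have h3 : s ^+ 2 * sq (vsub y q) <= s ^+ 2 * W by rewrite ler_pM2l ?exprn_gt0.
  rewrite inner_subr in h2.
  have h5 : s ^+ 2 * W <= s * e1 by rewrite expr2 -mulrA ler_pM2l.
  have h4 : 2 * s * (inner phi0 y - inner phi0 q) <= 2 * s * e1.
    by move: h2 h3 h5; rewrite /tau; lra.
  have h2s : 0 < 2 * s by rewrite mulr_gt0.
  move: h4; rewrite ler_pM2l //; lra.
exists phi0.
have Nphi0 : t * nu <= N phi0.
  have := P_sub_ge hN p q; rewrite /p (P_scale hN) ger0_norm; last lra.
  have : N q <= nu := hq; rewrite -/nu; nra.
have sqphi : e1 <= sq phi0.
  have hc := N_coord hN hM phi0.
  set lam := t * nu / T.
  have hlam : 0 < lam by rewrite divr_gt0 ?mulr_gt0.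
  have : \sum_(i < n) `|phi0 i| * N (ev i) <=
         \sum_(i < n) (phi0 i ^+ 2 / (2 * lam) + lam * N (ev i) ^+ 2 / 2).
    apply: ler_sum => i _.
    have hx : phi0 i ^+ 2 = `|phi0 i| ^+ 2 by rewrite real_normK ?num_real.
    rewrite hx; set X := `|phi0 i|; set Y := N (ev i).
    have : 0 <= (X - lam * Y) ^+ 2 by rewrite sqr_ge0.
    have e2 : X ^+ 2 / (2 * lam) + lam * Y ^+ 2 / 2 - X * Y = (X - lam * Y) ^+ 2 / (2 * lam).
      by field; rewrite gt_eqF.
    have : 0 <= (X - lam * Y) ^+ 2 / (2 * lam) by rewrite divr_ge0 ?sqr_ge0 // mulr_ge0 // ltW.
    lra.
  rewrite big_split /= -!mulr_suml -mulr_sumr sum_sq -/T.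
  move=> hsum.
  have : t * nu <= n%:R * sq phi0 / (2 * lam) + lam * T / 2 by lra.
  have -> : lam * T = t * nu by rewrite /lam mulrAC -mulrA mulfV ?gt_eqF ?mulr1.
  move=> hh.
  have hh2 : t * nu / 2 <= n%:R * sq phi0 / (2 * lam) by lra.
  have h2l : 0 < 2 * lam by rewrite mulr_gt0.
  rewrite ler_pdivlMr // in hh2.
  have e : t * nu / 2 * (2 * lam) * T = t ^+ 2 * nu ^+ 2.
    by rewrite /lam; field; rewrite gt_eqF.
  have hh4 : t ^+ 2 * nu ^+ 2 <= n%:R * sq phi0 * T.
    by rewrite -e ler_pM2r.
  rewrite /e1 ler_pdivrMr ?mulr_gt0 //.
  have -> : sq phi0 * (n%:R * T) = n%:R * sq phi0 * T by ring.
  exact: hh4.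
split.
  move=> e0; move: Nphi0; rewrite e0 (P0 hN); have : 0 < t * nu by rewrite mulr_gt0.
  lra.
have hMphi : nu * M phi0 <= inner phi0 q + e1.
  rewrite mulrC -ler_pdivlMr //; apply: dual_ge => // f hf.
  rewrite ler_pdivlMr //.
  have hy : B (vscale nu f).
    rewrite /B /= (P_scale hN) ger0_norm; last exact: ltW.
    by rewrite -[leRHS]mulr1 ler_pM2l.
  have := var _ hy; rewrite inner_scaler inner_sym mulrC //.
have ep : inner h phi0 * (1 + t) = inner phi0 q + sq phi0.
  rewrite inner_sym mulrC -inner_scaler -/p.
  have -> : p = vadd phi0 q by apply/ffunP => i; rewrite !ffunE subrK.
  by rewrite inner_addr addrC.
rewrite [(1 + t) * _]mulrC ep; lra.
Qed.

Lemma HB_dual h c : 0 <= c -> (forall u, inner h u <= c * M u) -> N h <= c.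
Proof.
move=> hc hu; rewrite leNgt; apply/negP => hlt.
have hnu : 0 < N h by exact: le_lt_trans hlt.
set t := (N h - c) / (2 * (c + 1)).
have ht : 0 < t by rewrite divr_gt0 ?subr_gt0 // mulr_gt0 //; lra.
have [phi [phi0 hphi]] := HB_aux ht hnu.
have hMp := P_pos (hMn hN hM) phi0.
have := hu phi => hh.
have : N h * M phi <= (1 + t) * (c * M phi).
  by apply: (le_trans hphi); rewrite ler_pM2l //; lra.
rewrite mulrA ler_pM2r // => hh2.
have : t * c < N h - c.
  rewrite /t mulrAC ltr_pdivrMr ?mulr_gt0 //; try lra.
  have : 0 < N h - c by lra.
  nra.
lra.
Qed.

End HB.

Section Scalar.
Variables (R : realType) (a b : R).
Hypothesis hab : a < b.

Definition clamp (t : R) : R := if t < a then a else if b < t then b else t.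
Definition Gf (t : R) : R := t * clamp t - clamp t ^+ 2 / 2.

Lemma clampP t : [\/ t < a /\ clamp t = a, a <= t <= b /\ clamp t = t | b < t /\ clamp t = b].
Proof.
rewrite /clamp; case: (ltP t a) => hta; first by constructor 1.
case: (ltP b t) => hbt; first by constructor 3.
by constructor 2; split => //; apply/andP; split.
Qed.

Lemma clamp_in t : a <= clamp t <= b.
Proof.
case: (clampP t) => -[h ->]; try (move: h => /andP[h1 h2]); apply/andP; split. all: try lra. all: have hh : a < b by exact: hab. all: lra.
Qed.

Lemma clamp_id t : a <= t <= b -> clamp t = t.
Proof. move=> /andP[h1 h2]; case: (clampP t) => -[h ->] //; try (move: h => /andP[? ?]); lra. Qed.

Lemma G_key s t : Gf t + clamp t * (s - t) + (clamp s - clamp t) ^+ 2 / 2 <= Gf s.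
Proof.
rewrite /Gf; have hs := clamp_in s; have ht := clamp_in t.
move: hs ht; set cs := clamp s; set ct := clamp t => hs ht.
suff : 0 <= (s - cs) * (cs - ct).
  have e : s * cs - cs ^+ 2 / 2 - (t * ct - ct ^+ 2 / 2 + ct * (s - t) + (cs - ct) ^+ 2 / 2)
     = (s - cs) * (cs - ct) by field.
  lra.
case: (clampP s); rewrite -/cs => -[h1 h2]; rewrite h2 in hs *; move: ht => /andP[? ?].
- apply: mulr_le0; move: hs => /andP[? ?]; lra.
- by rewrite subrr mul0r.
- apply: mulr_ge0; move: hs => /andP[? ?]; lra.
Qed.

Lemma G_up s t : Gf s <= Gf t + clamp t * (s - t) + (s - t) ^+ 2 / 2.
Proof.
have h := G_key t s.
have : 0 <= ((clamp s - clamp t) - (s - t)) ^+ 2 / 2 by rewrite divr_ge0 ?sqr_ge0.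
nra.
Qed.

Lemma G_mid s s' : Gf ((s + s') / 2) <= (Gf s + Gf s') / 2 - (clamp s - clamp s') ^+ 2 / 8.
Proof.
set m := (s + s') / 2.
have h1 := G_key s m; have h2 := G_key s' m.
have e : clamp m * (s - m) + clamp m * (s' - m) = 0 by rewrite /m; field.
have : (clamp s - clamp s') ^+ 2 / 4 <= (clamp s - clamp m) ^+ 2 / 2 + (clamp s' - clamp m) ^+ 2 / 2.
  have : 0 <= (clamp s + clamp s' - 2 * clamp m) ^+ 2 / 4 by rewrite divr_ge0 ?sqr_ge0.
  nra.
nra.
Qed.

Lemma G_lb f s : a <= f <= b -> - (f ^+ 2 / 2) <= Gf s - f * s.
Proof.
move=> hf; have cf := clamp_id hf; have h := G_key s f; rewrite /Gf cf in h; rewrite /Gf.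
have : 0 <= (clamp s - f) ^+ 2 / 2 by rewrite divr_ge0 ?sqr_ge0.
nra.
Qed.

Lemma G0 : Gf 0 <= 0.
Proof. rewrite /Gf mul0r sub0r oppr_le0 divr_ge0 ?sqr_ge0 //. Qed.

End Scalar.

Section Iter.
Variable R : realType.

Fixpoint pk (k : nat) (x : R) : R :=
  if k is k'.+1 then pk k' x + (x ^+ 2 - pk k' x ^+ 2) / 2 else 0.

Lemma pk_bounds (x : R) k : `|x| <= 1 ->
  0 <= pk k x <= `|x| /\ `|x| - pk k x <= `|x| * (1 - `|x| / 2) ^+ k.
Proof.
move=> hx; have hx0 := normr_ge0 x.
have ex : x ^+ 2 = `|x| ^+ 2 by rewrite real_normK ?num_real.
elim: k => [|k [/andP[h1 h2] h3]] /=.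
  by rewrite lexx hx0 expr0 mulr1 subr0.
set u := `|x| in hx hx0 ex h2 h3 *; set p := pk k x in h1 h2 h3 *.
rewrite ex.
have hf0 : 0 <= 1 - (u + p) / 2 by lra.
have hf1 : 1 - (u + p) / 2 <= 1 - u / 2 by lra.
have e : u - (p + (u ^+ 2 - p ^+ 2) / 2) = (u - p) * (1 - (u + p) / 2) by field.
have hq : 0 <= (1 - u / 2) ^+ k by rewrite exprn_ge0 //; lra.
split; first (apply/andP; split).
- have : 0 <= u ^+ 2 - p ^+ 2 by rewrite subr_ge0 lerXn2r ?nnegrE.
  lra.
- rewrite -subr_ge0 e mulr_ge0 //; lra.
- rewrite e exprSr mulrA.
  apply: le_trans (_ : (u - p) * (1 - u / 2) <= _).
    by rewrite ler_wpM2l // subr_ge0.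
  by rewrite ler_wpM2r //; lra.
Qed.

Lemma bern (v : R) k : 0 <= v <= 1 -> (1 - v) ^+ k * (1 + k%:R * v) <= 1.
Proof.
move=> /andP[h0 h1]; elim: k => [|k ih]; first by rewrite expr0 mul1r mul0r addr0.
have hq : 0 <= (1 - v) ^+ k by rewrite exprn_ge0 // subr_ge0.
rewrite exprSr -mulrA.
have : (1 - v) * (1 + k.+1%:R * v) <= 1 + k%:R * v.
  rewrite -natr1; have : 0 <= k.+1%:R * v ^+ 2 by rewrite mulr_ge0 ?sqr_ge0.
  rewrite -natr1 => h; nra.
move=> h; apply: le_trans ih; exact: ler_wpM2l.
Qed.

Lemma pk_err (e : R) (x : R) : 0 < e -> e <= 1 -> `|x| <= 1 ->
  `|x| - pk (Num.truncn (2 / e ^+ 2)).+1 x <= e.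
Proof.
move=> he he1 hx; set k := (Num.truncn (2 / e ^+ 2)).+1.
have [_ h] := pk_bounds k hx; apply: le_trans h _.
set u := `|x| in hx *; have hu0 : 0 <= u := normr_ge0 x.
have hq : 0 <= (1 - u / 2) ^+ k by rewrite exprn_ge0 //; lra.
have hq1 : (1 - u / 2) ^+ k <= 1 by rewrite exprn_ile1 //; lra.
case: (lerP u e) => hue.
  by apply: le_trans (_ : u * 1 <= _); [rewrite ler_wpM2l | rewrite mulr1].
apply: le_trans (_ : 1 * (1 - e / 2) ^+ k <= _).
  have hp : (1 - u / 2) ^+ k <= (1 - e / 2) ^+ k by rewrite lerXn2r ?nnegrE; lra.
  by apply: ler_pM => //.
rewrite mul1r.
have hk : 2 / e ^+ 2 < k%:R by apply: truncnS_gt.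
have hb := bern k (_ : 0 <= e / 2 <= 1).
have hb' : 0 <= e / 2 <= 1 by apply/andP; split; lra.
have := hb hb' => hb2.
have hqe : 0 <= (1 - e / 2) ^+ k by rewrite exprn_ge0 //; lra.
have h1 : 1 / e <= 1 + k%:R * (e / 2).
  have : 2 / e ^+ 2 * (e / 2) = 1 / e by field; rewrite gt_eqF.
  have : 2 / e ^+ 2 * (e / 2) <= k%:R * (e / 2) by rewrite ler_pM2r ?divr_gt0 // ltW.
  lra.
have : (1 - e / 2) ^+ k * (1 / e) <= 1.
  apply: le_trans hb2; exact: ler_wpM2l.
move=> h; have e2 : (1 - e / 2) ^+ k = (1 - e / 2) ^+ k * (1 / e) * e.
  by field; rewrite gt_eqF.
rewrite e2 -[X in _ <= X]mul1r; apply: ler_wpM2r => //; exact: ltW.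
Qed.

End Iter.

Section Approx.
Variables (R : realType) (a b : R).
Hypothesis hab : a < b.

Definition R0 (X : R) := X + `|a| + `|b| + 1.
Definition eA (X xi : R) := xi / (2 * R0 X + xi).
Definition kA (X xi : R) := (Num.truncn (2 / eA X xi ^+ 2)).+1.
Definition eS (X xi : R) := R0 X * eA X xi.
Definition lamS (X xi : R) := (b - a) / (b - a + 2 * eS X xi).
Definition Sf (X xi t : R) := (a + b) / 2 + lamS X xi * R0 X *
   (pk (kA X xi) ((t - a) / R0 X) - pk (kA X xi) ((t - b) / R0 X)) / 2.

Lemma clamp_abs t : clamp a b t = (a + b + `|t - a| - `|t - b|) / 2.
Proof.
have hab' : a < b := hab.
case: (clampP a b t) => -[h e]; rewrite e.
- have h1 : t - a < 0 by lra.
  have h2 : t - b < 0 by lra.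
  by rewrite (ltr0_norm h1) (ltr0_norm h2); field.
- move: h => /andP[h1' h2'].
  have h1 : 0 <= t - a by lra.
  have h2 : t - b <= 0 by lra.
  by rewrite (ger0_norm h1) (ler0_norm h2); field.
- have h1 : 0 < t - a by lra.
  have h2 : 0 < t - b by lra.
  by rewrite (gtr0_norm h1) (gtr0_norm h2); field.
Qed.

Lemma lam_lemma (d dc e : R) : `|dc| <= (b - a) / 2 -> `|d - dc| <= e ->
  `|(b - a) / (b - a + 2 * e) * d| <= (b - a) / 2 /\
  `|(b - a) / (b - a + 2 * e) * d - dc| <= 2 * e.
Proof.
have hab' : a < b := hab.
move=> h1 h2.
have he : 0 <= e := le_trans (normr_ge0 _) h2.
have hD : 0 < b - a + 2 * e by lra.
set lam := (b - a) / (b - a + 2 * e).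
have hl0 : 0 <= lam by rewrite divr_ge0 // ltW // ; lra.
have hd : `|d| <= (b - a) / 2 + e.
  have := ler_normD (d - dc) dc; rewrite subrK; lra.
have hlam : lam * ((b - a) / 2 + e) = (b - a) / 2.
  by rewrite /lam; field; rewrite gt_eqF.
have h1l : (1 - lam) * ((b - a) / 2 + e) = e.
  by rewrite /lam; field; rewrite gt_eqF.
have hl1 : lam <= 1 by rewrite /lam ler_pdivrMr // mul1r; lra.
split.
  by rewrite normrM ger0_norm // -hlam ler_wpM2l.
have e1 : lam * d - dc = (d - dc) - (1 - lam) * d by ring.
rewrite e1 (le_trans (ler_normB _ _)) // normrM (ger0_norm (_ : 0 <= 1 - lam)); last lra.
have : (1 - lam) * `|d| <= (1 - lam) * ((b - a) / 2 + e) by rewrite ler_wpM2l //; lra.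
lra.
Qed.

Lemma Sf_props (X xi t : R) : 0 <= X -> 0 < xi -> `|t| <= X ->
  a <= Sf X xi t <= b /\ `|Sf X xi t - clamp a b t| <= xi.
Proof.
have hab' : a < b := hab.
move=> hX hxi ht.
have hR : 0 < R0 X by rewrite /R0; have := normr_ge0 a; have := normr_ge0 b; lra.
have hRi : `|(R0 X)^-1| = (R0 X)^-1 by rewrite ger0_norm // invr_ge0 ltW.
have heA : 0 < eA X xi by rewrite /eA divr_gt0 //; lra.
have heA1 : eA X xi <= 1 by rewrite /eA ler_pdivrMr ?mul1r; lra.
have hx1 : `|(t - a) / R0 X| <= 1.
  rewrite normrM hRi ler_pdivrMr // mul1r.
  rewrite (le_trans (ler_normB _ _)) // /R0; have := normr_ge0 b; lra.
have hx2 : `|(t - b) / R0 X| <= 1.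
  rewrite normrM hRi ler_pdivrMr // mul1r.
  rewrite (le_trans (ler_normB _ _)) // /R0; have := normr_ge0 a; lra.
have [/andP[h10 h11] h12] := pk_bounds (kA X xi) hx1.
have [/andP[h20 h21] h22] := pk_bounds (kA X xi) hx2.
have g1 := pk_err heA heA1 hx1; have g2 := pk_err heA heA1 hx2.
rewrite -/(kA X xi) in g1 g2.
set A1 := pk (kA X xi) ((t - a) / R0 X) in h10 h11 g1 *.
set A2 := pk (kA X xi) ((t - b) / R0 X) in h20 h21 g2 *.
set d := R0 X * (A1 - A2) / 2.
set dc := clamp a b t - (a + b) / 2.
have hdc : `|dc| <= (b - a) / 2.
  rewrite /dc ler_norml; have := clamp_in hab t => /andP[? ?]; apply/andP; split; lra.
have eabs1 : `|t - a| = R0 X * `|(t - a) / R0 X|.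
  by rewrite normrM hRi mulrCA mulfV ?gt_eqF ?mulr1.
have eabs2 : `|t - b| = R0 X * `|(t - b) / R0 X|.
  by rewrite normrM hRi mulrCA mulfV ?gt_eqF ?mulr1.
have hddc : `|d - dc| <= eS X xi.
  rewrite /d /dc clamp_abs eabs1 eabs2 /eS.
  set u1 := `|(t - a) / R0 X| in h11 g1 *; set u2 := `|(t - b) / R0 X| in h21 g2 *.
  have -> : R0 X * (A1 - A2) / 2 - ((a + b + R0 X * u1 - R0 X * u2) / 2 - (a + b) / 2)
     = R0 X * ((A1 - u1) - (A2 - u2)) / 2 by field.
  have hZ1 : A1 - u1 - (A2 - u2) <= eA X xi by lra.
  have hZ2 : - eA X xi <= A1 - u1 - (A2 - u2) by lra.
  rewrite ler_norml; apply/andP; split; nra.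
have [hr he] := lam_lemma hdc hddc.
have eSf : Sf X xi t = (a + b) / 2 + lamS X xi * d.
  by rewrite /Sf /d /A1 /A2; ring.
have heS : 2 * eS X xi <= xi.
  have hD : 0 < 2 * R0 X + xi by lra.
  have -> : 2 * eS X xi = (2 * R0 X * xi) / (2 * R0 X + xi).
    by rewrite /eS /eA; field; rewrite gt_eqF.
  rewrite ler_pdivrMr //.
  have : 0 <= xi * xi by rewrite mulr_ge0 // ltW.
  nra.
split.
  rewrite eSf; move: hr; rewrite -/(lamS X xi) ler_norml => /andP[? ?].
  apply/andP; split; lra.
rewrite eSf; move: he; rewrite -/(lamS X xi).
have -> : (a + b) / 2 + lamS X xi * d - clamp a b t = lamS X xi * d - dc by rewrite /dc; ring.
lra.
Qed.

End Approx.

Fixpoint mk (R : realType) (k : nat) : R :=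
  if k is k'.+1 then mk R k' + (1 + mk R k' ^+ 2) / 2 else 0.

Lemma mk_ge0 (R : realType) k : 0 <= mk R k.
Proof.
elim: k => [|k ih] //=; apply: addr_ge0 => //; apply: divr_ge0 => //.
by apply: addr_ge0; rewrite ?sqr_ge0.
Qed.

Definition CS (R : realType) (a b X xi : R) :=
  `|(a + b) / 2| + lamS a b X xi * R0 a b X * mk R (kA a b X xi).

Definition vmap (R : realType) (n : nat) (F : R -> R) (v : vec R n) : vec R n :=
  [ffun i => F (v i)].

Section VecApprox.
Variables (R : realType) (n : nat) (N : vec R n -> R).
Hypotheses (hN : is_norm N) (hM : is_algebra_norm (dual_norm N)).
Local Notation M := (dual_norm N).
Local Set Default Proof Using "All".
Implicit Types (f g y u v x : vec R n).

Lemma M_pk k x : M x <= 1 -> M (vmap (pk k) x) <= mk R k.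
Proof.
move=> hx; have hMn' := hMn hN hM.
elim: k => [|k ih] /=.
  have -> : vmap (pk 0) x = vzero R n by apply/ffunP => i; rewrite !ffunE.
  by rewrite (P0 hMn').
set P := vmap (pk k) x.
have -> : vmap (pk k.+1) x = vadd P (vscale (1/2) (vsub (vmul x x) (vmul P P))).
  by apply/ffunP => i; rewrite !ffunE /=; field.
apply: le_trans (P_add hMn' _ _) _.
rewrite (P_scale hMn') ger0_norm ?divr_ge0 //.
have h1 := P_sub hMn' (vmul x x) (vmul P P).
have h2 := M_mul hN hM x x; have h3 := M_mul hN hM P P.
have hx0 := P_ge0 hMn' x; have hP0 := P_ge0 hMn' P; have hm := mk_ge0 R k.
have : M x * M x <= 1 by nra.
have : M P * M P <= mk R k ^+ 2 by nra.
nra.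
Qed.

Lemma M_Sf a b X xi v : a < b -> 0 <= X -> 0 < xi -> M v <= X ->
  M (vmap (Sf a b X xi) v) <= CS a b X xi.
Proof.
move=> hab hX hxi hv; have hMn' := hMn hN hM.
have hR : 0 < R0 a b X by rewrite /R0; have := normr_ge0 a; have := normr_ge0 b; lra.
have heS : 0 <= eS a b X xi.
  by rewrite /eS /eA mulr_ge0 ?(ltW hR) // divr_ge0 ?(ltW hxi) //; lra.
have hlam : 0 <= lamS a b X xi by rewrite /lamS divr_ge0 //; lra.
set x1 := vscale (R0 a b X)^-1 (vsub v (vscale a (vone R n))).
set x2 := vscale (R0 a b X)^-1 (vsub v (vscale b (vone R n))).
have Mx : forall c, `|c| <= `|a| + `|b| ->
    M (vscale (R0 a b X)^-1 (vsub v (vscale c (vone R n)))) <= 1.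
  move=> c hc; rewrite (P_scale hMn') ger0_norm ?invr_ge0 ?(ltW hR) //.
  rewrite mulrC ler_pdivrMr // mul1r.
  apply: le_trans (P_sub hMn' _ _) _.
  rewrite (P_scale hMn') (M_one hN hM) mulr1 /R0; lra.
have hx1 : M x1 <= 1 by apply: Mx; have := normr_ge0 b; lra.
have hx2 : M x2 <= 1 by apply: Mx; have := normr_ge0 a; lra.
have -> : vmap (Sf a b X xi) v = vadd (vscale ((a + b) / 2) (vone R n))
    (vscale (lamS a b X xi * R0 a b X / 2) (vsub (vmap (pk (kA a b X xi)) x1) (vmap (pk (kA a b X xi)) x2))).
  apply/ffunP => i; rewrite !ffunE /Sf; congr (_ + _).
    by rewrite mulr1.
  by rewrite !mulr1 !(mulrC (R0 a b X)^-1) [RHS]mulrAC.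
apply: le_trans (P_add hMn' _ _) _.
rewrite !(P_scale hMn') (M_one hN hM) mulr1 /CS lerD2l.
rewrite ger0_norm ?divr_ge0 ?mulr_ge0 ?(ltW hR) //.
have := P_sub hMn' (vmap (pk (kA a b X xi)) x1) (vmap (pk (kA a b X xi)) x2).
have := M_pk (kA a b X xi) hx1; have := M_pk (kA a b X xi) hx2.
have hc : 0 <= lamS a b X xi * R0 a b X / 2 by apply: divr_ge0 => //; apply: mulr_ge0 => //; exact: ltW.
move=> h1 h2 h3.
set m := mk R (kA a b X xi) in h1 h2 *.
have hh : M (vsub (vmap (pk (kA a b X xi)) x1) (vmap (pk (kA a b X xi)) x2)) <= m + m by lra.
apply: le_trans (ler_wpM2l hc hh) _.
set l := lamS a b X xi; set r := R0 a b X.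
  have -> : l * r / 2 * (m + m) = l * r * m by field.
  by [].
  lra.
rewrite invr_ge0; lra.
Qed.

End VecApprox.

Section Avg.
Variables (R : realType) (n : nat).
Definition avg (F : 'I_n -> R) : R := n%:R^-1 * \sum_(i < n) F i.

Lemma avg_le (F G : 'I_n -> R) : (forall i, F i <= G i) -> avg F <= avg G.
Proof. by move=> h; rewrite /avg ler_wpM2l ?invr_ge0 ?ler0n // ler_sum. Qed.

Lemma avg_ext (F G : 'I_n -> R) : (forall i, F i = G i) -> avg F = avg G.
Proof. by move=> h; rewrite /avg; congr (_ * _); apply: eq_bigr. Qed.

Lemma avgD (F G : 'I_n -> R) : avg (fun i => F i + G i) = avg F + avg G.
Proof. by rewrite /avg big_split /= mulrDr. Qed.

Lemma avgB (F G : 'I_n -> R) : avg (fun i => F i - G i) = avg F - avg G.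
Proof. by rewrite /avg sumrB mulrBr. Qed.

Lemma avgZ c (F : 'I_n -> R) : avg (fun i => c * F i) = c * avg F.
Proof. by rewrite /avg -mulr_sumr mulrCA. Qed.

Lemma avg_const c : (0 < n)%N -> avg (fun _ => c) = c.
Proof.
move=> hn; rewrite /avg sumr_const card_ord -[c *+ n]mulr_natl mulrA mulVf ?mul1r //.
by rewrite pnatr_eq0 -lt0n.
Qed.

Lemma inner_avg (f g : vec R n) : inner f g = avg (fun i => f i * g i).
Proof. by []. Qed.
End Avg.

Section Main.
Variables (R : realType) (n : nat) (N : vec R n -> R).
Hypotheses (hN : is_norm N) (hM : is_algebra_norm (dual_norm N)).
Variables (a b : R) (f : vec R n).
Hypotheses (hab : a < b) (hf : takes_values_in a b f).
Local Notation M := (dual_norm N).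
Local Set Default Proof Using "All".
Implicit Types (g u v x psi : vec R n).

Definition B0 := `|a| + `|b|.
Definition Sfun psi := avg (fun i => Gf a b (psi i) - f i * psi i).
Definition Phi (d : R) psi := Sfun psi + d * M psi.
Definition V (d : R) := inf [set Phi d psi | psi in [set: vec R n]]%classic.

Lemma hMn2 : is_norm M. Proof. exact: hMn hN hM. Qed.
Lemma npos : (0 < n)%N. Proof. exact: n_gt0 hN hM. Qed.

Lemma f_sq i : f i ^+ 2 / 2 <= B0 ^+ 2 / 2.
Proof.
have := hf i => /andP[h1 h2].
have ha : - `|a| <= a by rewrite lerNl -normrN ler_norm.
have hb : b <= `|b| by rewrite ler_norm.
have h0 := normr_ge0 a; have h0' := normr_ge0 b.
rewrite /B0; nra.
Qed.

Lemma S_lb psi : - (B0 ^+ 2 / 2) <= Sfun psi.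
Proof.
rewrite -[X in X <= _](avg_const (n := n) _ npos); apply: avg_le => i.
have := G_lb hab (psi i) (hf i); have := f_sq i; lra.
Qed.

Lemma Phi_lb d psi : 0 <= d -> - (B0 ^+ 2 / 2) <= Phi d psi.
Proof.
move=> hd; have := S_lb psi; have : 0 <= d * M psi by rewrite mulr_ge0 ?(P_ge0 hMn2).
rewrite /Phi; lra.
Qed.

Lemma Phi0 d : Phi d (vzero R n) <= 0.
Proof.
rewrite /Phi (P0 hMn2) mulr0 addr0.
rewrite -(avg_const (n := n) 0 npos); apply: avg_le => i; rewrite ffunE mulr0 subr0.
exact: G0.
Qed.

Lemma Vset_lb d : 0 <= d -> has_lbound [set Phi d psi | psi in [set: vec R n]]%classic.
Proof. by move=> hd; exists (- (B0 ^+ 2 / 2)) => x [psi _ <-]; apply: Phi_lb. Qed.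

Lemma Vset_ne d : ([set Phi d psi | psi in [set: vec R n]] !=set0)%classic.
Proof. by exists (Phi d (vzero R n)), (vzero R n). Qed.

Lemma V_le d psi : 0 <= d -> V d <= Phi d psi.
Proof. by move=> hd; apply: ge_inf; [exact: Vset_lb | exists psi]. Qed.

Lemma V_lb d : 0 <= d -> - (B0 ^+ 2 / 2) <= V d.
Proof.
move=> hd; apply: lb_le_inf; first exact: Vset_ne.
by move=> x [psi _ <-]; apply: Phi_lb.
Qed.

Lemma V_le0 d : 0 <= d -> V d <= 0.
Proof. by move=> hd; apply: le_trans (V_le _ hd) (Phi0 d). Qed.

Lemma near_min d tau : 0 <= d -> 0 < tau -> exists psi, Phi d psi <= V d + tau.
Proof.
move=> hd ht; have [x [psi _ <-] h] := inf_adherent ht (conj (Vset_ne d) (Vset_lb hd)).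
by exists psi; apply: ltW.
Qed.

Lemma M_near d psi : 0 < d -> Phi d psi <= V d + d ^+ 2 / 2 ->
  M psi <= (d ^+ 2 + B0 ^+ 2) / (2 * d).
Proof.
move=> hd h; have := V_le0 (ltW hd); have := S_lb psi; move: h; rewrite /Phi => h h1 h2.
rewrite ler_pdivlMr ?mulr_gt0 //; nra.
Qed.

End Main.

Section Main2.
Variables (R : realType) (n : nat) (N : vec R n -> R).
Hypotheses (hN : is_norm N) (hM : is_algebra_norm (dual_norm N)).
Variables (a b : R) (f : vec R n).
Hypotheses (hab : a < b) (hf : takes_values_in a b f).
Local Notation M := (dual_norm N).
Local Notation Phi' := (Phi N a b f).
Local Notation V' := (V N a b f).
Local Set Default Proof Using "All".
Implicit Types (g u v x psi : vec R n).

Lemma N_resid d psi : 0 < d -> Phi' d psi <= V' d + d ^+ 2 / 2 ->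
  N (vsub f (vmap (clamp a b) psi)) <= 2 * d.
Proof.
move=> hd hpsi; have hMn' := hMn hN hM.
set h := vsub f (vmap (clamp a b) psi).
have key : forall u, M u = 1 -> inner h u <= 2 * d.
  move=> u hu1.
  set psi' := vadd psi (vscale d u).
  have hV := V_le hN hM hab hf psi' (ltW hd).
  have hS : Sfun a b f psi' - Sfun a b f psi <= - d * inner h u + d ^+ 2 / 2 * sq u.
    rewrite /Sfun -avgB /sq !inner_avg -!avgZ -avgD.
    apply: avg_le => i; rewrite /h /psi' !ffunE.
    have := G_up hab (psi i + d * u i) (psi i).
    have -> : psi i + d * u i - psi i = d * u i by ring.
    move=> hG.
    have -> : - d * ((f i - clamp a b (psi i)) * u i) + d ^+ 2 / 2 * (u i * u i)
      = clamp a b (psi i) * (d * u i) + (d * u i) ^+ 2 / 2 - f i * (d * u i) by ring.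
    have -> : Gf a b (psi i + d * u i) - f i * (psi i + d * u i) - (Gf a b (psi i) - f i * psi i)
      = Gf a b (psi i + d * u i) - Gf a b (psi i) - f i * (d * u i) by ring.
    lra.
  have hMp : M psi' <= M psi + d * M u.
    apply: le_trans (P_add hMn' _ _) _; rewrite (P_scale hMn') ger0_norm //; exact: ltW.
  have hsq : sq u <= 1 by have := sqM hN hM u; rewrite hu1 expr1n.
  move: hV hpsi; rewrite /Phi => hV hpsi.
  have h1 : d * M psi' <= d * M psi + d * (d * M u).
    by rewrite -mulrDr ler_wpM2l // ltW.
  have h2 : d ^+ 2 / 2 * sq u <= d ^+ 2 / 2 by rewrite -[X in _ <= X]mulr1 ler_wpM2l // divr_ge0 // sqr_ge0.
  rewrite hu1 mulr1 in h1.
  have : d * inner h u <= d * (2 * d).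
    have e : d * (2 * d) = 2 * d ^+ 2 by rewrite expr2; ring.
    rewrite e; lra.
  by rewrite ler_pM2l.
apply: (HB_dual hN hM); first by rewrite mulr_ge0 // ltW.
move=> u; have [hu0|hu0] := eqVneq (M u) 0.
  by rewrite (P_eq0 hMn' hu0) inner0r (P0 hMn') mulr0.
have hMu : 0 < M u by rewrite lt_neqAle eq_sym hu0 (P_ge0 hMn').
set u' := vscale (M u)^-1 u.
have hu'1 : M u' = 1 by rewrite (P_scale hMn') ger0_norm ?invr_ge0 ?(ltW hMu) // mulVf.
have eu : u = vscale (M u) u'.
  by apply/ffunP => i; rewrite !ffunE mulrA mulfV // mul1r.
rewrite [in X in X <= _]eu inner_scaler mulrC ler_pM2r //; exact: key.
Qed.

Lemma close d d' psi psi' tau tau' th : 0 < d' -> d' <= d ->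
  Phi' d psi <= V' d + tau -> Phi' d' psi' <= V' d' + tau' -> V' d - V' d' <= th ->
  sq (vsub (vmap (clamp a b) psi) (vmap (clamp a b) psi')) <= 4 * (th + tau + tau').
Proof.
move=> hd' hdd h1 h2 h3; have hMn' := hMn hN hM.
set m := vscale 2^-1 (vadd psi psi').
set cd := vsub (vmap (clamp a b) psi) (vmap (clamp a b) psi').
have hV := V_le hN hM hab hf m (ltW hd').
have hS : Sfun a b f m <= 2^-1 * (Sfun a b f psi + Sfun a b f psi') + (- 8^-1) * sq cd.
  have -> : 2^-1 * (Sfun a b f psi + Sfun a b f psi') + (- 8^-1) * sq cd =
      avg (fun i => 2^-1 * ((Gf a b (psi i) - f i * psi i) + (Gf a b (psi' i) - f i * psi' i))
         + (- 8^-1) * (cd i * cd i)).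
    by rewrite avgD !avgZ avgD.
  rewrite /Sfun; apply: avg_le => i; rewrite /m /cd !ffunE.
  have := G_mid hab (psi i) (psi' i).
  rewrite [(psi i + psi' i) / 2]mulrC => hG.
  have -> : f i * (2^-1 * (psi i + psi' i)) = 2^-1 * (f i * psi i + f i * psi' i) by ring.
  lra.
have hMm : M m <= 2^-1 * (M psi + M psi').
  rewrite (P_scale hMn') ger0_norm ?invr_ge0 // ler_wpM2l ?invr_ge0 //.
  exact: P_add.
have hMpsi := P_ge0 hMn' psi; have hMpsi' := P_ge0 hMn' psi'.
move: hV h1 h2; rewrite /Phi => hV h1' h2'.
have hdM : d' * M psi <= d * M psi by rewrite ler_wpM2r.
have hdm : d' * M m <= d' * (2^-1 * (M psi + M psi')) by rewrite ler_wpM2l // ltW.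
have hsq := sq_ge0 cd.
lra.
Qed.

End Main2.

Lemma CS_ge0 (R : realType) (a b X xi : R) : a < b -> 0 <= X -> 0 < xi -> 0 <= CS a b X xi.
Proof.
move=> hab hX hxi.
have hR : 0 < R0 a b X by rewrite /R0; have := normr_ge0 a; have := normr_ge0 b; lra.
have heS : 0 <= eS a b X xi.
  by rewrite /eS /eA mulr_ge0 ?(ltW hR) // divr_ge0 ?(ltW hxi) //; lra.
have hlam : 0 <= lamS a b X xi by rewrite /lamS; apply: divr_ge0; lra.
rewrite /CS; apply: addr_ge0 => //; apply: mulr_ge0; last exact: mk_ge0.
apply: mulr_ge0 => //; exact: ltW.
Qed.

Lemma sq_add_le (R : realType) (n : nat) (x y : vec R n) :
  sq (vadd x y) <= 2 * sq x + 2 * sq y.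
Proof.
rewrite /sq !inner_avg -!avgZ -avgD; apply: avg_le => i; rewrite !ffunE.
have := sqr_ge0 (x i - y i); nra.
Qed.

Unset Implicit Arguments.
Theorem theorem5p1 (R : realType) (a b : R) (hab : a < b)
  (eta : R -> R)
  (eta_pos : forall x, 0 <= x -> 0 < eta x)
  (eta_decr : forall x y, 0 <= x -> x <= y -> eta y <= eta x)
  (eps : R) (heps : 0 < eps) :
  exists C0 : R, forall (n : nat) (N : vec R n -> R),
    is_norm N -> is_algebra_norm (dual_norm N) ->
    forall f : vec R n, takes_values_in a b f ->
    exists f1 f2 f3 : vec R n,
      f = vadd (vadd f1 f2) f3 /\
      dual_norm N f1 <= C0 /\
      N f2 <= eta (dual_norm N f1) /\
      l2norm f3 <= eps /\
      takes_values_in a b f1 /\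
      takes_values_in a b (vadd f1 f3).
Proof.
set B := B0 a b.
set K := fun d : R => (d ^+ 2 + B ^+ 2) / (2 * d).
set xi := eps / 2.
set Cf := fun d : R => CS a b (K d) xi.
set th := eps ^+ 2 / 32.
set d0 := eps / 8.
set dseq := fun j : nat => iter j (fun d => Num.min d (eta (Cf d) / 2)) d0.
set J := (Num.truncn (B ^+ 2 / (2 * th))).+1.
have hxi : 0 < xi by rewrite /xi; apply: divr_gt0.
have hth : 0 < th by rewrite /th; apply: divr_gt0 => //; exact: exprn_gt0.
have hK : forall d, 0 < d -> 0 <= K d.
  by move=> d hd; rewrite /K divr_ge0 ?addr_ge0 ?sqr_ge0 // mulr_ge0 // ltW.
have hCf : forall d, 0 < d -> 0 <= Cf d by move=> d hd; apply: CS_ge0 => //; exact: hK.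
have dpos : forall j, 0 < dseq j.
  elim => [|j ih] /=; first by rewrite /dseq /d0 divr_gt0.
  rewrite /dseq /= -/(dseq j) lt_min ih /= divr_gt0 //; apply: eta_pos; exact: hCf.
have dS : forall j, dseq j.+1 = Num.min (dseq j) (eta (Cf (dseq j)) / 2) by [].
have dle : forall j, dseq j.+1 <= dseq j by move=> j; rewrite dS ge_min lexx.
have dS2 : forall j, 2 * dseq j.+1 <= eta (Cf (dseq j)).
  move=> j; have : dseq j.+1 <= eta (Cf (dseq j)) / 2 by rewrite dS ge_min lexx orbT.
  lra.
have dle0 : forall j, dseq j <= d0.
  elim => [|j ih]; first by rewrite lexx.
  exact: le_trans (dle j) ih.
have hd0 : d0 = eps / 8 by [].
exists (\sum_(j < J) Cf (dseq j)).
move=> n N hN hM f hf.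
have hMn' := hMn hN hM.
(* pigeonhole *)
have [j [hj hjth]] : exists j, (j < J)%N /\ V N a b f (dseq j) - V N a b f (dseq j.+1) <= th.
  apply: contrapT => hno.
  have hall : forall j, (j < J)%N -> th < V N a b f (dseq j) - V N a b f (dseq j.+1).
    move=> j hj; rewrite ltNge; apply/negP => hle; apply: hno; by exists j.
  have ind : forall k, (k <= J)%N -> V N a b f (dseq k) <= V N a b f (dseq 0) - k%:R * th.
    elim => [|k ih] hk; first by rewrite mul0r subr0.
    have := hall k hk; have := ih (ltnW hk); rewrite -natr1; lra.
  have := ind J (leqnn J).
  have := V_le0 hN hM hab hf (ltW (dpos 0)).
  have := V_lb hN hM hab hf (ltW (dpos J)).
  have hJ : B ^+ 2 / (2 * th) < J%:R by apply: truncnS_gt.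
  have hJ2 : B ^+ 2 / 2 < J%:R * th.
    have h2th : 0 < 2 * th by apply: mulr_gt0.
    move: hJ; rewrite ltr_pdivrMr // => hJ.
    rewrite ltr_pdivrMr //; move: hJ; rewrite /B; nra.
  rewrite /B in hJ2; lra.
set d := dseq j; set d' := dseq j.+1.
have hd : 0 < d := dpos j; have hd' : 0 < d' := dpos j.+1.
have hdd : d' <= d := dle j.
have ht1 : 0 < d ^+ 2 / 2 by apply: divr_gt0 => //; exact: exprn_gt0.
have ht2 : 0 < d' ^+ 2 / 2 by apply: divr_gt0 => //; exact: exprn_gt0.
have [psi hpsi] := near_min hN hM hab hf (ltW hd) ht1.
have [psi' hpsi'] := near_min hN hM hab hf (ltW hd') ht2.
have hMpsi : dual_norm N psi <= K d := M_near hN hM hab hf hd hpsi.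
set f1 := vmap (Sf a b (K d) xi) psi.
set f2 := vsub f (vmap (clamp a b) psi').
set f3 := vsub (vmap (clamp a b) psi') f1.
have hMf1 : dual_norm N f1 <= Cf d := M_Sf hN hM hab (hK d hd) hxi hMpsi.
have hcoord : forall i, `|psi i| <= K d by move=> i; exact: le_trans (coordM hN hM psi i) hMpsi.
exists f1, f2, f3; split.
  by apply/ffunP => i; rewrite !ffunE; ring.
split.
  apply: le_trans hMf1 _.
  rewrite (bigD1 (Ordinal hj)) //= lerDl sumr_ge0 // => i _; exact: hCf.
split.
  apply: le_trans (N_resid hN hM hab hf hd' hpsi') _.
  apply: le_trans (dS2 j) _; apply: eta_decr => //; exact: P_ge0 hMn' _.
split.
  have hcl := close hN hM hab hf hd' hdd hpsi hpsi' hjth.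
  have e3 : f3 = vadd (vscale (-1) (vsub (vmap (clamp a b) psi) (vmap (clamp a b) psi')))
                      (vsub (vmap (clamp a b) psi) f1).
    by apply/ffunP => i; rewrite !ffunE; ring.
  have hsq1 : sq (vscale (-1) (vsub (vmap (clamp a b) psi) (vmap (clamp a b) psi')))
      = sq (vsub (vmap (clamp a b) psi) (vmap (clamp a b) psi')).
    by rewrite /sq inner_scalel inner_scaler; ring.
  have hsq2 : sq (vsub (vmap (clamp a b) psi) f1) <= xi ^+ 2.
    rewrite /sq inner_avg -[X in _ <= X](avg_const (n := n) _ (n_gt0 hN hM)).
    apply: avg_le => i; rewrite !ffunE.
    have [_ h] := Sf_props hab (hK d hd) hxi (hcoord i).
    rewrite -expr2 -real_normK ?num_real // lerXn2r ?nnegrE ?(ltW hxi) //.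
    by rewrite distrC.
  have hsq3 := sq_add_le (vscale (-1) (vsub (vmap (clamp a b) psi) (vmap (clamp a b) psi')))
                      (vsub (vmap (clamp a b) psi) f1).
  rewrite -e3 hsq1 in hsq3.
  have htau : d ^+ 2 / 2 <= eps ^+ 2 / 128.
    have : d <= eps / 8 := dle0 j.
    have := ltW hd; nra.
  have htau' : d' ^+ 2 / 2 <= eps ^+ 2 / 128.
    have : d' <= eps / 8 := dle0 j.+1.
    have := ltW hd'; nra.
  have hf3 : sq f3 <= eps ^+ 2.
    rewrite /th /xi in hcl hsq2; nra.
  rewrite /l2norm -/(sq f3) -(ger0_norm (ltW heps)) -sqrtr_sqr.
  exact: ler_wsqrtr.
split.
  move=> i; rewrite /f1 ffunE; have [h _] := Sf_props hab (hK d hd) hxi (hcoord i); exact: h.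
move=> i; rewrite /f3 !ffunE subrKC; exact: clamp_in hab _.
Qed.
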